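(* Let $M=(S,\Sigma,\delta,s_0,F)$ be a deterministic finite automaton, let $T\ge 1$ be an integer, and for each $s\in S$ let $P(\cdot\mid s)$ and $Q(\cdot\mid s)$ be probability distributions on $\Sigma$. Define distributions $P$ and $Q$ on $\Sigma^T$ by $P(x)=\prod_{t=1}^T P(\sigma_t\mid s_t)$ and $Q(x)=\prod_{t=1}^T Q(\sigma_t\mid s_t)$ for $x=\sigma_1\cdots\sigma_T$, where $s_1\cdots s_{T+1}$ is the state sequence induced by $x$, and let $f^*(x)=\mathbb{1}(s_{T+1}\in F)$. Define $P_t$ on $S$ by $P_1(s')=\mathbb{1}(s'=s_0)$ and $P_t(s')=\mathbb{P}_{s\sim P_{t-1},\sigma\sim P(\cdot\mid s)}[s'=\delta(s,\sigma)]$ for $t\ge2$, and $P_t(s,\sigma)=P_t(s)P(\sigma\mid s)$; define $Q_t(s)$ and $Q_t(s,\sigma)$ analogously using $Q(\cdot\mid s)$. Let $\hat g:S\times\Sigma\to S$ and $\hat h:S\to\{0,1\}$ be arbitrary functions, and define $\hat f:\Sigma^T\to\{0,1\}$ by $\hat f(\sigma_1\cdots\sigma_T)=\hat h(\hat s_{T+1})$, where $\hat s_1=s_0$ and $\hat s_{t+1}=\hat g(\hat s_t,\sigma_t)$. Let $\tilde L_P(\hat f)=\sum_{t=1}^T L_{P_t}(\hat g)+L_{P_{T+1}}(\hat h)$. Then $$L_Q(\hat f)\le \tilde L_P(\hat f)+\sum_{t=1}^T\mathrm{TV}(P_t(s,\sigma),Q_t(s,\sigma))+\mathrm{TV}(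P_{T+1}(s),Q_{T+1}(s)).$$
   Context: A deterministic finite automaton $M=(S,\Sigma,\delta,s_0,F)$ has a finite state set $S$, a finite alphabet $\Sigma$, a transition function $\delta:S\times\Sigma\to S$, an initial state $s_0\in S$ and final states $F\subseteq S$. For $x=\sigma_1\cdots\sigma_T$, the induced state sequence is $s_1=s_0$, $s_{t+1}=\delta(s_t,\sigma_t)$. Losses: $L_Q(\hat f)=\mathbb{P}_{x\sim Q}[\hat f(x)\neq f^*(x)]$; $L_{P_t}(\hat g)=\mathbb{P}_{(s,\sigma)\sim P_t(s,\sigma)}[\hat g(s,\sigma)\neq\delta(s,\sigma)]$; $L_{P_{T+1}}(\hat h)=\mathbb{P}_{s\sim P_{T+1}}[\hat h(s)\neq\mathbb{1}(s\in F)]$. The total variation distance is defined without the factor $1/2$: $\mathrm{TV}(\mu,\nu)=\sum_a|\mu(a)-\nu(a)|$. *)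

(* Defs.v *)
From mathcomp Require Import all_boot all_order all_algebra.
Set Implicit Arguments. Unset Strict Implicit. Unset Printing Implicit Defensive.
Import Order.TTheory GRing.Theory Num.Theory.
Local Open Scope ring_scope.

Section DFA.
Variables (R : realFieldType) (S Sigma : finType).

Definition run (g : S -> Sigma -> S) (s : S) (x : seq Sigma) : S := foldl g s x.

Fixpoint word_prob (P : S -> Sigma -> R) (delta : S -> Sigma -> S) (s : S)
    (x : seq Sigma) : R :=
  match x with
  | [::] => 1
  | a :: x' => P s a * word_prob P delta (delta s a) x'
  end.

Definition step_dist (P : S -> Sigma -> R) (delta : S -> Sigma -> S)
    (mu : S -> R) (s' : S) : R :=
  \sum_(s : S) \sum_(a : Sigma) mu s * P s a * (s' == delta s a)%:R.

(* statedist n = distribution after n steps; P_t = statedist (t-1). *)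
Fixpoint statedist (P : S -> Sigma -> R) (delta : S -> Sigma -> S) (s0 : S)
    (n : nat) : S -> R :=
  match n with
  | 0 => fun s' => (s' == s0)%:R
  | n'.+1 => step_dist P delta (statedist P delta s0 n')
  end.

Definition Pt (P : S -> Sigma -> R) (delta : S -> Sigma -> S) (s0 : S)
    (t : nat) : S -> R := statedist P delta s0 t.-1.

Definition Pt_joint (P : S -> Sigma -> R) (delta : S -> Sigma -> S) (s0 : S)
    (t : nat) (s : S) (a : Sigma) : R := Pt P delta s0 t s * P s a.

Definition loss_trans (P : S -> Sigma -> R) (delta : S -> Sigma -> S) (s0 : S)
    (t : nat) (ghat : S -> Sigma -> S) : R :=
  \sum_(s : S) \sum_(a : Sigma) Pt_joint P delta s0 t s a * (ghat s a != delta s a)%:R.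

Definition loss_final (P : S -> Sigma -> R) (delta : S -> Sigma -> S) (s0 : S)
    (t : nat) (F : {set S}) (hhat : S -> bool) : R :=
  \sum_(s : S) Pt P delta s0 t s * (hhat s != (s \in F))%:R.

(* TV without the factor 1/2. *)
Definition TV_joint (P Q : S -> Sigma -> R) (delta : S -> Sigma -> S) (s0 : S)
    (t : nat) : R :=
  \sum_(s : S) \sum_(a : Sigma) `|Pt_joint P delta s0 t s a - Pt_joint Q delta s0 t s a|.

Definition TV_state (P Q : S -> Sigma -> R) (delta : S -> Sigma -> S) (s0 : S)
    (t : nat) : R :=
  \sum_(s : S) `|Pt P delta s0 t s - Pt Q delta s0 t s|.

Definition loss_word (T : nat) (Q : S -> Sigma -> R) (delta : S -> Sigma -> S)
    (s0 : S) (fhat fstar : T.-tuple Sigma -> bool) : R :=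
  \sum_(x : T.-tuple Sigma) word_prob Q delta s0 x * (fhat x != fstar x)%:R.

End DFA.

(* Main.v *)
Require Import Defs.
From mathcomp Require Import all_boot all_order all_algebra.
From mathcomp Require Import ring lra.
Import Order.TTheory GRing.Theory Num.Theory.
Local Open Scope ring_scope.
Set Implicit Arguments. Unset Strict Implicit.

Section Aux.
Variables (R : realFieldType) (S Sigma : finType).

Lemma sum_tuple0 (G : seq Sigma -> R) : \sum_(x : 0.-tuple Sigma) G x = G [::].
Proof. by rewrite (big_pred1 [tuple]) // => x; rewrite [x]tuple0 /= ; apply/esym/eqP. Qed.

Lemma sum_tupleS n (G : seq Sigma -> R) :
  \sum_(x : n.+1.-tuple Sigma) G x = \sum_(a : Sigma) \sum_(x : n.-tuple Sigma) G (a :: x).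
Proof.
rewrite pair_big /=.
rewrite (reindex (fun p : Sigma * n.-tuple Sigma => [tuple of p.1 :: p.2])) /=.
  by apply: eq_bigr => -[a x].
exists (fun x : n.+1.-tuple Sigma => (thead x, [tuple of behead x])).
  by move=> [a x] _; congr pair; apply: val_inj.
by move=> x _; apply: val_inj => /=; rewrite [in RHS](tuple_eta x).
Qed.

Lemma wp_ge0 (P : S -> Sigma -> R) d (hP : forall s a, 0 <= P s a) s x :
  0 <= word_prob P d s x.
Proof. by elim: x s => //= a x IH s; rewrite mulr_ge0. Qed.

Lemma wp_sum1 (P : S -> Sigma -> R) d (hP1 : forall s, \sum_a P s a = 1) n s :
  \sum_(x : n.-tuple Sigma) word_prob P d s x = 1.
Proof.
elim: n s => [|n IH] s; first by rewrite sum_tuple0.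
rewrite (sum_tupleS _ (word_prob P d s)) /=.
under eq_bigr => a _ do rewrite -mulr_sumr IH mulr1.
exact: hP1.
Qed.

Fixpoint bnd (err : S -> Sigma -> R) (fin : S -> R) (d : S -> Sigma -> S)
  (s : S) (x : seq Sigma) : R :=
  match x with [::] => fin s | a :: x' => err s a + bnd err fin d (d s a) x' end.

Lemma bnd_ge0 err fin d (he : forall s a, 0 <= err s a) (hf : forall s, 0 <= fin s) s x :
  0 <= bnd err fin d s x.
Proof. by elim: x s => //= a x IH s; rewrite addr_ge0. Qed.

Lemma step_sum (P : S -> Sigma -> R) d mu (G : S -> R) :
  \sum_s' step_dist P d mu s' * G s' = \sum_s \sum_a mu s * P s a * G (d s a).
Proof.
rewrite /step_dist.
under eq_bigr do rewrite mulr_suml.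
rewrite exchange_big; apply: eq_bigr => s _.
under eq_bigr do rewrite mulr_suml.
rewrite exchange_big; apply: eq_bigr => a _.
rewrite (bigD1 (d s a)) //= eqxx mulr1 big1 ?addr0 // => s' /negPf ->.
by rewrite mulr0 mul0r.
Qed.

Lemma expect_bnd (P : S -> Sigma -> R) d (hP1 : forall s, \sum_a P s a = 1)
  err fin n (mu : S -> R) :
  \sum_s mu s * \sum_(x : n.-tuple Sigma) word_prob P d s x * bnd err fin d s x
  = \sum_(t < n) \sum_s \sum_a iter t (step_dist P d) mu s * P s a * err s a
    + \sum_s iter n (step_dist P d) mu s * fin s.
Proof.
elim: n mu => [|n IH] mu.
  rewrite big_ord0 add0r /=; apply: eq_bigr => s _.
  by rewrite (sum_tuple0 (fun x => word_prob P d s x * bnd err fin d s x)) /= mul1r.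
have -> : \sum_s mu s * \sum_(x : n.+1.-tuple Sigma) word_prob P d s x * bnd err fin d s x
  = \sum_s \sum_a mu s * P s a * err s a
    + \sum_s' step_dist P d mu s' *
        (\sum_(x : n.-tuple Sigma) word_prob P d s' x * bnd err fin d s' x).
  rewrite step_sum -big_split; apply: eq_bigr => s _.
  rewrite (sum_tupleS _ (fun x => word_prob P d s x * bnd err fin d s x)) -big_split mulr_sumr; apply: eq_bigr => a _ /=.
  have -> : \sum_(x : n.-tuple Sigma) P s a * word_prob P d (d s a) x *
       (err s a + bnd err fin d (d s a) x)
     = P s a * err s a * \sum_(x : n.-tuple Sigma) word_prob P d (d s a) x
       + P s a * \sum_(x : n.-tuple Sigma) word_prob P d (d s a) x * bnd err fin d (d s a) x.
    rewrite !mulr_sumr -big_split; apply: eq_bigr => x _ /=; ring.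
  rewrite wp_sum1 // mulr1; ring.
rewrite IH big_ord_recl addrA /=; congr (_ + _ + _).
  by apply: eq_bigr => i _; rewrite add0n -iterSr.
by apply: eq_bigr => s _; rewrite -iterSr.
Qed.

Lemma iter_statedist (P : S -> Sigma -> R) d s0 n :
  iter n (step_dist P d) (fun s => (s == s0)%:R) = statedist P d s0 n.
Proof. by elim: n => //= n ->. Qed.

End Aux.

Theorem theorem4p7 (R : realFieldType) (S Sigma : finType)
    (delta : S -> Sigma -> S) (s0 : S) (F : {set S}) (T : nat) (hT : (1 <= T)%N)
    (P Q : S -> Sigma -> R)
    (P_ge0 : forall s a, 0 <= P s a) (P_sum1 : forall s, \sum_(a : Sigma) P s a = 1)
    (Q_ge0 : forall s a, 0 <= Q s a) (Q_sum1 : forall s, \sum_(a : Sigma) Q s a = 1)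
    (ghat : S -> Sigma -> S) (hhat : S -> bool) :
  let fstar := fun x : T.-tuple Sigma => run delta s0 x \in F in
  let fhat := fun x : T.-tuple Sigma => hhat (run ghat s0 x) in
  let LtildeP := \sum_(1 <= t < T.+1) loss_trans P delta s0 t ghat
                 + loss_final P delta s0 T.+1 F hhat in
  loss_word Q delta s0 fhat fstar
    <= LtildeP + \sum_(1 <= t < T.+1) TV_joint P Q delta s0 t
       + TV_state P Q delta s0 T.+1.
Proof.
cbv zeta.
pose err := fun s a => (ghat s a != delta s a)%:R : R.
pose fin := fun s => (hhat s != (s \in F))%:R : R.
have err0 : forall s a, 0 <= err s a by move=> s a; rewrite /err; case: (_ != _).
have fin0 : forall s, 0 <= fin s by move=> s; rewrite /fin; case: (_ != _).
have claim1 : forall (x : seq Sigma) s,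
    (hhat (foldl ghat s x) != (foldl delta s x \in F))%:R <= bnd err fin delta s x.
  elim=> [|a x IH] s /=; first by [].
  have [e|ne] := eqVneq (ghat s a) (delta s a).
    by rewrite /err e eqxx add0r; apply: IH.
  rewrite /err ne /=; apply: (@le_trans _ _ 1); first by case: (_ != _).
  by rewrite lerDl bnd_ge0.
have step1 : loss_word Q delta s0 (fun x : T.-tuple Sigma => hhat (run ghat s0 x))
    (fun x : T.-tuple Sigma => run delta s0 x \in F) <=
    \sum_s (s == s0)%:R * \sum_(x : T.-tuple Sigma)
        word_prob Q delta s x * bnd err fin delta s x.
  rewrite (bigD1 s0) //= eqxx mul1r [X in _ + X]big1 ?addr0; last first.
    by move=> s /negPf ->; rewrite mul0r.
  apply: ler_sum => x _; apply: ler_wpM2l; first exact: wp_ge0.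
  exact: claim1.
rewrite expect_bnd // iter_statedist in step1.
apply: (le_trans step1).
rewrite !big_add1 /= !big_mkord.
apply: (@le_trans _ _ ((\sum_(i < T) loss_trans P delta s0 i.+1 ghat
     + \sum_(i < T) TV_joint P Q delta s0 i.+1)
     + (loss_final P delta s0 T.+1 F hhat + TV_state P Q delta s0 T.+1))); last first.
  by rewrite le_eqVlt; apply/orP; left; apply/eqP; ring.
apply: lerD.
  rewrite -big_split; apply: ler_sum => t _.
  rewrite iter_statedist /loss_trans /TV_joint -big_split; apply: ler_sum => s _.
  rewrite -big_split; apply: ler_sum => a _.
  rewrite /Pt_joint /Pt /= /err.
  set p := statedist P delta s0 t s * P s a.
  set q := statedist Q delta s0 t s * Q s a.
  case: (_ != _); rewrite ?mulr0 ?mulr1 ?add0r //.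
  rewrite distrC; have := ler_norm (q - p); lra.
rewrite /loss_final /TV_state -big_split; apply: ler_sum => s _.
rewrite /Pt /= /fin.
set p := statedist P delta s0 T s.
set q := statedist Q delta s0 T s.
case: (_ != _); rewrite ?mulr0 ?mulr1 ?add0r //.
rewrite distrC; have := ler_norm (q - p); lra.
Qed.
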